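(* Let $(k,R,t)\in\mathbb{R}^3$ with $R>0$ and $t\neq 0$, put $c=\frac{1-t^2}{1+t^2}$, $s=\frac{2t}{1+t^2}$, and let $$F_1^h=Y^2-(Xs-Yc)^2+2ZW-W^2,\qquad F_2^h=\bigl(X^2-2kZW+(R^2+k^2)W^2\bigr)^2-4R^2W^2(X^2+Y^2).$$ Let $T\subset\mathbb{P}^3$ be the projective closure of the trisector $\{F_1^h(x,y,z,1)=F_2^h(x,y,z,1)=0\}\subset\mathbb{R}^3$. Then $T$ meets the plane at infinity $\{W=0\}$ in the unique point $p_\infty=[0:0:1:0]$. In the affine chart $Z=1$, the first nonzero homogeneous term of a local defining equation of $T$ at $p_\infty$ is $E(X,Y)^2$, where $$E(X,Y)=X^2-2kQ(X,Y),\qquad Q(X,Y)=\tfrac12\bigl(s^2X^2-2scXY-s^2Y^2\bigr).$$ The discriminant of the quadratic form $E$ is $\Delta_Q=4ks^2(k-1)$. Hence the asymptotic direction pattern degenerates (i.e. $E$ fails to factor into two distinct linear forms) exactly when $\Delta_Q=0$, that is, at $k=0$ and $k=1$.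
   Context: $F_1^h,F_2^h$ are the homogenizations ($x=X/W$, $y=Y/W$, $z=Z/W$) of the $L_1$–$L_2$ bisector $y^2-(xs-yc)^2+2z-1$ and the polynomialized $L_1$–circle bisector $(x^2-2kz+R^2+k^2)^2-4R^2(x^2+y^2)$, for $L_1$ the $x$-axis, $L_2$ the line through $(0,0,1)$ with direction $(c,s,0)$, and the circle of radius $R$ centered at $(0,0,k)$ in the plane $z=k$. The projective closure is the zero set of the saturated ideal $(\langle F_1^h,F_2^h\rangle : W^\infty)$. In the chart $Z=1$ with $p_\infty$ at the origin of $(X,Y,W)$, the equation $F_1^h(X,Y,1,W)=0$ has a unique local analytic solution $W=\omega(X,Y)$ with $\omega(0,0)=0$ (implicit function theorem, since $\partial_W F_1^h=2$ there), and the local defining equation is $F_2^h(X,Y,1,\omega(X,Y))=0$. *)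

(* Defs.v *)
From HB Require Import structures.
From mathcomp Require Import all_boot all_order all_algebra.
From mathcomp Require Import reals complex.
From mathcomp Require Import mpoly.

Set Implicit Arguments.
Unset Strict Implicit.
Unset Printing Implicit Defensive.

Import Order.TTheory GRing.Theory Num.Theory.
Local Open Scope ring_scope.

Section Trisector.
Variable R : realType.

Definition vX : {mpoly R[4]} := 'X_(0 : 'I_4).
Definition vY : {mpoly R[4]} := 'X_(1 : 'I_4).
Definition vZ : {mpoly R[4]} := 'X_(2 : 'I_4).
Definition vW : {mpoly R[4]} := 'X_(3 : 'I_4).

Definition cpar (t : R) : R := (1 - t ^+ 2) / (1 + t ^+ 2).
Definition spar (t : R) : R := (2 * t) / (1 + t ^+ 2).

Definition F1h (t : R) : {mpoly R[4]} :=
  vY ^+ 2 - (vX * (spar t)%:MP - vY * (cpar t)%:MP) ^+ 2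
  + 2%:R%:MP * vZ * vW - vW ^+ 2.

Definition F2h (k r : R) : {mpoly R[4]} :=
  (vX ^+ 2 - (2 * k)%:MP * vZ * vW + (r ^+ 2 + k ^+ 2)%:MP * vW ^+ 2) ^+ 2
  - (4 * r ^+ 2)%:MP * vW ^+ 2 * (vX ^+ 2 + vY ^+ 2).

Definition pt4 (x y z w : R) : 'I_4 -> R :=
  fun i => nth 0 [:: x; y; z; w] i.

Definition in_saturation (k r t : R) (P : {mpoly R[4]}) : Prop :=
  exists (m : nat) (A B : {mpoly R[4]}),
    vW ^+ m * P = A * F1h t + B * F2h k r.

(* The nonzero vector (x,y,z,w) represents a point [x:y:z:w] of the
   projective closure T, i.e. of the zero set of the saturated ideal. *)
Definition in_closure (k r t : R) (x y z w : R) : Prop :=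
  [|| x != 0, y != 0, z != 0 | w != 0] /\
  forall P, in_saturation k r t P -> P.@[pt4 x y z w] = 0.

Definition Qform (F : fieldType) (s c : F) (X Y : F) : F :=
  2^-1 * (s ^+ 2 * X ^+ 2 - 2 * s * c * X * Y - s ^+ 2 * Y ^+ 2).
Definition Eform (F : fieldType) (k s c : F) (X Y : F) : F :=
  X ^+ 2 - 2 * k * Qform s c X Y.

Definition local_eq (k r t : R) (omega : R -> R -> R) (X Y : R) : R :=
  (F2h k r).@[pt4 X Y 1 (omega X Y)].

(* omega is the local solution W = omega(X,Y), omega(0,0) = 0, of
   F_1^h(X,Y,1,W) = 0 near the origin (continuous at the origin; by the
   implicit function theorem this determines the analytic solution). *)
Definition local_solution (t : R) (omega : R -> R -> R) : Prop :=
  omega 0 0 = 0 /\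
  (forall e : R, 0 < e -> exists2 d : R, 0 < d &
      forall X Y, `|X| < d -> `|Y| < d -> `|omega X Y| < e) /\
  (exists2 d : R, 0 < d &
      forall X Y, `|X| < d -> `|Y| < d ->
        (F1h t).@[pt4 X Y 1 (omega X Y)] = 0).

Definition leading_form_is (G H : R -> R -> R) (deg : nat) : Prop :=
  (exists X Y, H X Y != 0) /\
  exists2 C : R, 0 < C & exists2 d : R, 0 < d &
    forall X Y, `|X| < d -> `|Y| < d ->
      `|G X Y - H X Y| <= C * (`|X| + `|Y|) ^+ deg.+1.

Definition qdisc (F : fieldType) (f : F -> F -> F) : F :=
  let a := f 1 0 in let c := f 0 1 in let b := f 1 1 - a - c in
  b ^+ 2 - 4 * a * c.

Definition factors_distinct_lin (f : R[i] -> R[i] -> R[i]) : Prop :=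
  exists a1 b1 a2 b2 : R[i], a1 * b2 - a2 * b1 != 0 /\
    forall X Y, f X Y = (a1 * X + b1 * Y) * (a2 * X + b2 * Y).

End Trisector.

(* Main.v *)
Require Import Defs.
From HB Require Import structures.
From mathcomp Require Import all_boot all_order all_algebra.
From mathcomp Require Import reals complex.
From mathcomp Require Import mpoly.
From mathcomp Require Import ring lra.
Import Order.TTheory GRing.Theory Num.Theory.
Local Open Scope ring_scope.

Section Eval.
Variable R : realType.
Variable S : comNzRingType.
Variable f : {rmorphism R -> S}.
Variable h : 'I_4 -> S.

Lemma mmapXi (i : 'I_4) : mmap f h ('X_i : {mpoly R[4]}) = h i.
Proof. by rewrite mmapX mmap1U. Qed.

Lemma mmapCf (c : R) : mmap f h (c%:MP : {mpoly R[4]}) = f c.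
Proof. by rewrite mmapC. Qed.

Lemma mmap_F1 t : mmap f h (F1h t) =
  h 1 ^+ 2 - (h 0 * f (spar t) - h 1 * f (cpar t)) ^+ 2 + 2 * h 2 * h 3 - h 3 ^+ 2.
Proof.
set s := spar t; set c := cpar t.
rewrite /F1h /vX /vY /vZ /vW !(rmorphB, rmorphD, rmorphM, rmorphXn) /=.
by rewrite !mmapXi !mmapCf rmorph1; ring.
Qed.

Lemma mmap_F2 k r : mmap f h (F2h k r) =
  (h 0 ^+ 2 - f (2 * k) * h 2 * h 3 + f (r ^+ 2 + k ^+ 2) * h 3 ^+ 2) ^+ 2
  - f (4 * r ^+ 2) * h 3 ^+ 2 * (h 0 ^+ 2 + h 1 ^+ 2).
Proof.
set a := 2 * k; set b := r ^+ 2 + k ^+ 2; set d := 4 * r ^+ 2.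
rewrite /F2h /vX /vY /vZ /vW !(rmorphB, rmorphD, rmorphM, rmorphXn) /=.
by rewrite !mmapXi !mmapCf.
Qed.
End Eval.
Section Real.
Variable R : realType.
Lemma meval_F1 (v : 'I_4 -> R) t : (F1h t).@[v] =
  v 1 ^+ 2 - (v 0 * spar t - v 1 * cpar t) ^+ 2 + 2 * v 2 * v 3 - v 3 ^+ 2.
Proof. exact: (@mmap_F1 R R idfun v t). Qed.
Lemma meval_F2 (v : 'I_4 -> R) k r : (F2h k r).@[v] =
  (v 0 ^+ 2 - (2 * k) * v 2 * v 3 + (r ^+ 2 + k ^+ 2) * v 3 ^+ 2) ^+ 2
  - (4 * r ^+ 2) * v 3 ^+ 2 * (v 0 ^+ 2 + v 1 ^+ 2).
Proof. exact: (@mmap_F2 R R idfun v k r). Qed.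
End Real.

Section Facts.
Variable R : realType.
Variable t : R.
Hypothesis ht : t != 0.

Lemma den_gt0 : 0 < 1 + t ^+ 2.
Proof. by rewrite ltr_pwDl // sqr_ge0. Qed.
Lemma den_neq0 : 1 + t ^+ 2 != 0.
Proof. by rewrite gt_eqF // den_gt0. Qed.

Lemma cs1 : cpar t ^+ 2 + spar t ^+ 2 = 1.
Proof. rewrite /cpar /spar; have := den_neq0; move=> h; field. exact h. Qed.

Lemma s_neq0 : spar t != 0.
Proof.
rewrite /spar mulf_neq0 ?invr_eq0 ?den_neq0 //.
by rewrite mulf_neq0 // pnatr_eq0.
Qed.

Lemma onemc_neq0 : 1 - cpar t != 0.
Proof.
have h := den_neq0.
have -> : 1 - cpar t = 2 * t ^+ 2 / (1 + t ^+ 2) by rewrite /cpar; field.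
by rewrite !mulf_neq0 ?invr_eq0 ?expf_neq0 ?pnatr_eq0.
Qed.

Lemma onepc_neq0 : 1 + cpar t != 0.
Proof.
have h := den_neq0.
have -> : 1 + cpar t = 2 / (1 + t ^+ 2) by rewrite /cpar; field.
by rewrite !mulf_neq0 ?invr_eq0 ?expf_neq0 ?pnatr_eq0.
Qed.
End Facts.

Local Open Scope complex_scope.

Section P3.
Variable R : realType.

Lemma qdisc_E (k s c : R) : c ^+ 2 + s ^+ 2 = 1 ->
  qdisc (Eform k s c) = 4 * k * s ^+ 2 * (k - 1).
Proof.
move=> h; apply/eqP; rewrite -subr_eq0.
have -> : qdisc (Eform k s c) - 4 * k * s ^+ 2 * (k - 1)
   = 4 * k ^+ 2 * s ^+ 2 * (c ^+ 2 + s ^+ 2 - 1).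
  by rewrite /qdisc /Eform /Qform; field.
by rewrite h subrr mulr0.
Qed.

Lemma qdisc0 (k s : R) : s != 0 -> (4 * k * s ^+ 2 * (k - 1) = 0 <-> (k = 0 \/ k = 1)).
Proof.
move=> hs; split.
  move/eqP; rewrite !mulf_eq0 pnatr_eq0 /= (negbTE hs) /= orbF subr_eq0.
  by case/orP => /eqP ->; [left|right].
by move=> [->|->]; ring.

Qed.

Lemma Eform_C (k s c : R) (X Y : R[i]) :
  Eform (k%:C) (s%:C) (c%:C) X Y =
  (Eform k s c 1 0)%:C * X ^+ 2 +
  (Eform k s c 1 1 - Eform k s c 1 0 - Eform k s c 0 1)%:C * X * Y +
  (Eform k s c 0 1)%:C * Y ^+ 2.
Proof.
rewrite /Eform /Qform !(rmorphB, rmorphD, rmorphM, rmorphXn, rmorphV, rmorph1, rmorph0, rmorph_nat).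
all: try by rewrite unitfE pnatr_eq0.
by field.
Qed.

Lemma factor_iff (k s c : R) :
  (~ factors_distinct_lin (Eform (k%:C) (s%:C) (c%:C))) <-> qdisc (Eform k s c) = 0.
Proof.
set a := Eform k s c 1 0; set b := Eform k s c 1 1 - a - Eform k s c 0 1.
set g := Eform k s c 0 1.
have hq : qdisc (Eform k s c) = b ^+ 2 - 4 * a * g by [].
rewrite hq; split.
  move=> hn; apply/eqP; apply/negPn/negP => hD; apply: hn.
  have [a0|a0] := eqVneq a 0.
    have hb : b != 0.
      by apply: contraNneq hD => ->; rewrite a0; apply/eqP; ring.
    exists 0, 1, b%:C, g%:C; split.
      by rewrite mul0r mulr1 sub0r oppr_eq0 fmorph_eq0.
    move=> X Y; rewrite Eform_C -/a -/b -/g a0 /=; ring.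
  pose D : R[i] := (b ^+ 2 - 4 * a * g)%:C.
  pose d := sqrtC D.
  have hd : d ^+ 2 = D by rewrite sqrtCK.
  have hD' : D != 0 by rewrite fmorph_eq0.
  have dn0 : d != 0 by apply: contraNneq hD' => h0; rewrite -hd h0 expr0n.
  have aC : a%:C != 0 by rewrite fmorph_eq0.
  exists a%:C, ((b%:C - d) / 2), 1, ((b%:C + d) / (2 * a%:C)); split.
    have -> : a%:C * ((b%:C + d) / (2 * a%:C)) - 1 * ((b%:C - d) / 2) = d.
      by field; exact: aC.
    exact: dn0.
  move=> X Y; rewrite Eform_C -/a -/b -/g.
  clearbody a b g.
  have hg : g%:C = (b%:C ^+ 2 - D) / (4 * a%:C).
    rewrite /D !(rmorphB, rmorphM, rmorphXn, rmorph_nat) /=; field.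
    exact: aC.
  rewrite hg -hd; field; exact: aC.
move=> h0 [a1 [b1 [a2 [b2 [hn hf]]]]]; move: hn.
have h10 := hf 1 0; have h01 := hf 0 1; have h11 := hf 1 1.
rewrite Eform_C in h10; rewrite Eform_C in h01; rewrite Eform_C in h11.
rewrite -/a -/b -/g in h10 h01 h11.
clearbody a b g.
have ea : a%:C = a1 * a2.
  transitivity (a%:C * 1 ^+ 2 + b%:C * 1 * 0 + g%:C * 0 ^+ 2); first by ring.
  by rewrite h10; ring.
have eg : g%:C = b1 * b2.
  transitivity (a%:C * 0 ^+ 2 + b%:C * 0 * 1 + g%:C * 1 ^+ 2); first by ring.
  by rewrite h01; ring.
have eb : b%:C = a1 * b2 + a2 * b1.
  transitivity ((a%:C * 1 ^+ 2 + b%:C * 1 * 1 + g%:C * 1 ^+ 2) - a%:C - g%:C); first by ring.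
  by rewrite h11 ea eg; ring.
have : (b ^+ 2 - 4 * a * g)%:C = (a1 * b2 - a2 * b1) ^+ 2.
  rewrite !(rmorphB, rmorphM, rmorphXn, rmorph_nat) /= ea eb eg; ring.
rewrite h0 rmorph0 => e hn; move: (expf_neq0 2 hn); by rewrite -e eqxx.
Qed.
End P3.

Section P2.
Variable R : realType.

Lemma sqr_norm_eq (x : R) : `|x| ^+ 2 = x ^+ 2.
Proof. by rewrite real_normK ?num_real. Qed.

Lemma part2 (k r t : R) (ht : t != 0) (omega : R -> R -> R) :
  local_solution t omega ->
  leading_form_is (local_eq k r t omega)
       (fun X Y => (Eform k (spar t) (cpar t) X Y) ^+ 2) 4.
Proof.
set s := spar t; set c := cpar t.
have hcs : c ^+ 2 + s ^+ 2 = 1 by exact: cs1.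
case=> [h00 [hcont [d0 d0p hF]]].
have [d1 d1p hd1] := hcont (1/2) (ltac:(lra)).
pose K := r ^+ 2 + k ^+ 2 - k.
pose C0 := 2 * (1 + `|k|) * `|K| + 2 * K ^+ 2 + 4 * r ^+ 2.
have C0p : 0 <= C0.
  rewrite /C0; have := normr_ge0 k; have := normr_ge0 K; have := sqr_ge0 K;
  have := sqr_ge0 r; nra.
split.
  have [h0|h0] := eqVneq (k * s ^+ 2) 0.
    exists 1, 0; rewrite expf_neq0 //.
    have -> : Eform k s c 1 0 = 1 - k * s ^+ 2 by rewrite /Eform /Qform; field.
    by rewrite h0 subr0 oner_neq0.
  exists 0, 1; rewrite expf_neq0 //.
  have -> : Eform k s c 0 1 = k * s ^+ 2 by rewrite /Eform /Qform; field.
  exact: h0.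
exists (2 * C0 + 1); first lra.
exists (Num.min d0 (Num.min d1 1)); first by rewrite !lt_min d0p d1p ltr01.
move=> x y; rewrite !lt_min => /andP[hx0 /andP[hx1 hx2]] /andP[hy0 /andP[hy1 hy2]].
have hW := hd1 x y hx1 hy1.
have hF1 := hF x y hx0 hy0; rewrite meval_F1 /pt4 /= -/s -/c in hF1.
rewrite /local_eq meval_F2 /pt4 /=.
move: hW hF1; set W := omega x y => hW hF1.
pose q2 := s ^+ 2 * x ^+ 2 - 2 * s * c * x * y - s ^+ 2 * y ^+ 2.
pose S2 := x ^+ 2 + y ^+ 2.
have hq : 2 * W - W ^+ 2 = q2.
  have : (x * s - y * c) ^+ 2 - y ^+ 2 - q2 = y ^+ 2 * (c ^+ 2 + s ^+ 2 - 1).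
    by rewrite /q2; ring.
  rewrite hcs subrr mulr0; lra.
have hS : `|q2| <= S2.
  have e1 : (s * x - c * y) ^+ 2 + (c * x + s * y) ^+ 2 = (c ^+ 2 + s ^+ 2) * S2.
    by rewrite /S2; ring.
  rewrite hcs mul1r in e1.
  have e2 : q2 = (s * x - c * y) ^+ 2 - y ^+ 2.
    have : (s * x - c * y) ^+ 2 - y ^+ 2 - q2 = y ^+ 2 * (c ^+ 2 + s ^+ 2 - 1).
      by rewrite /q2; ring.
    rewrite hcs subrr mulr0; lra.
  have := sqr_ge0 (s * x - c * y); have := sqr_ge0 (c * x + s * y).
  have := sqr_ge0 x; have := sqr_ge0 y.
  have eS : S2 = x ^+ 2 + y ^+ 2 by [].
  rewrite ler_norml => *; apply/andP; split; lra.
have hWS : `|W| <= S2.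
  move: hW; rewrite ltr_norml => /andP[hW1 hW2].
  have e : `|W| * (2 - W) = `|q2|.
    by rewrite -hq -[2 - W]ger0_norm ?subr_ge0 -?normrM; [congr `|_|; ring | lra].
  have := normr_ge0 W; nra.
set e := Eform k s c x y.
have hE : e = x ^+ 2 - k * q2 by rewrite /e /Eform /Qform /q2; field.
have hEb : `|e| <= (1 + `|k|) * S2.
  rewrite hE; apply: (le_trans (ler_normB _ _)).
  have ex2 : `|x ^+ 2| = x ^+ 2 := ger0_norm (sqr_ge0 x).
  rewrite ex2 normrM.
  have eS : S2 = x ^+ 2 + y ^+ 2 by [].
  have := normr_ge0 k; have := normr_ge0 q2; have := sqr_ge0 y; nra.
have hU : x ^+ 2 - 2 * k * 1 * W + (r ^+ 2 + k ^+ 2) * W ^+ 2 = e + K * W ^+ 2.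
  by rewrite hE -hq /K; ring.
rewrite hU.
have -> : (e + K * W ^+ 2) ^+ 2 - 4 * r ^+ 2 * W ^+ 2 * (x ^+ 2 + y ^+ 2) - e ^+ 2
   = 2 * e * K * W ^+ 2 + K ^+ 2 * W ^+ 2 * W ^+ 2 - 4 * r ^+ 2 * W ^+ 2 * S2.
  by rewrite /S2; ring.
have S2p : 0 <= S2 by rewrite /S2; have := sqr_ge0 x; have := sqr_ge0 y; lra.
have hx' : `|x| < 1 by [].
have hy' : `|y| < 1 by [].
have S2l : S2 <= (`|x| + `|y|) ^+ 2.
  rewrite /S2 -(sqr_norm_eq x) -(sqr_norm_eq y).
  have := normr_ge0 x; have := normr_ge0 y; nra.
have S22 : S2 <= 2.
  rewrite /S2 -(sqr_norm_eq x) -(sqr_norm_eq y).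
  have := normr_ge0 x; have := normr_ge0 y; nra.
set a := `|W| in hWS.
have Wa : W ^+ 2 = a ^+ 2 by rewrite /a sqr_norm_eq.
have ap : 0 <= a by rewrite /a normr_ge0.
set rho := `|x| + `|y| in S2l *.
have rhop : 0 <= rho by rewrite /rho addr_ge0.
have rho2 : rho <= 2 by rewrite /rho; lra.
have hS3 : S2 ^+ 3 <= 2 * rho ^+ 5.
  have h1 : S2 ^+ 3 <= (rho ^+ 2) ^+ 3 by rewrite lerXn2r // ?nnegrE ?sqr_ge0.
  apply: (le_trans h1); rewrite -exprM.
  have -> : rho ^+ (2 * 3) = rho * rho ^+ 5 by rewrite -exprS.
  by rewrite ler_wpM2r // exprn_ge0.
have a2 : a ^+ 2 <= S2 ^+ 2 by rewrite lerXn2r // ?nnegrE.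
have hT1 : `|2 * e * K * W ^+ 2| <= 2 * (1 + `|k|) * `|K| * S2 ^+ 3.
  have -> : `|2 * e * K * W ^+ 2| = 2 * `|e| * `|K| * a ^+ 2.
    by rewrite !normrM -/a normr_nat; ring.
  have h1 : `|e| * a ^+ 2 <= ((1 + `|k|) * S2) * S2 ^+ 2.
    exact: ler_pM (normr_ge0 e) (sqr_ge0 a) hEb a2.
  have := normr_ge0 K; nra.
have hT2 : `|K ^+ 2 * W ^+ 2 * W ^+ 2| <= 2 * K ^+ 2 * S2 ^+ 3.
  have -> : `|K ^+ 2 * W ^+ 2 * W ^+ 2| = K ^+ 2 * a ^+ 2 * a ^+ 2.
    by rewrite !normrM -/a -(sqr_norm_eq K); ring.
  have h1 : a ^+ 2 * a ^+ 2 <= S2 ^+ 2 * S2 ^+ 2.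
    exact (ler_pM (sqr_ge0 a) (sqr_ge0 a) a2 a2).
  have h2 : S2 ^+ 2 * S2 ^+ 2 <= 2 * S2 ^+ 3.
    have := exprn_ge0 3 S2p; nra.
  have := sqr_ge0 K; nra.
have hT3 : `|4 * r ^+ 2 * W ^+ 2 * S2| <= 4 * r ^+ 2 * S2 ^+ 3.
  have -> : `|4 * r ^+ 2 * W ^+ 2 * S2| = 4 * r ^+ 2 * a ^+ 2 * S2.
    by rewrite !normrM -/a normr_nat (ger0_norm S2p) -(sqr_norm_eq r); ring.
  have h1 : a ^+ 2 * S2 <= S2 ^+ 2 * S2 by rewrite ler_wpM2r.
  have := sqr_ge0 r; nra.
apply: (le_trans (ler_normB _ _)).
apply: (le_trans (lerD (ler_normD _ _) (lexx _))).
have h1 : C0 * S2 ^+ 3 <= C0 * (2 * rho ^+ 5) by rewrite ler_wpM2l.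
have := exprn_ge0 5 rhop.
have eC : C0 = 2 * (1 + `|k|) * `|K| + 2 * K ^+ 2 + 4 * r ^+ 2 by [].
nra.
Qed.
End P2.

Set Implicit Arguments.
Unset Strict Implicit.
Unset Printing Implicit Defensive.

Section Cont.
Variable R : realType.
Local Notation C := R[i].

Definition nc (z : C) : R := complex.Re `|z|.

Lemma ncE (z : C) : `|z| = (nc z)%:C.
Proof. by rewrite /nc normc_def. Qed.

Lemma nc_ge0 z : 0 <= nc z.
Proof. by rewrite /nc normc_def /= sqrtr_ge0. Qed.

Lemma ncM x y : nc (x * y) = nc x * nc y.
Proof. by apply: (@complexI R); rewrite rmorphM /= -!ncE normrM. Qed.

Lemma ncD x y : nc (x + y) <= nc x + nc y.
Proof. by rewrite -lecR rmorphD /= -!ncE ler_normD. Qed.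

Lemma ncN x : nc (- x) = nc x.
Proof. by rewrite /nc normrN. Qed.

Lemma nc0 : nc 0 = 0.
Proof. by rewrite /nc normr0. Qed.

Lemma ncR (x : R) : nc (x%:C) = `|x|.
Proof. by rewrite /nc normc_def /= expr0n /= addr0 sqrtr_sqr. Qed.

Lemma nc_eq0 z : (nc z == 0) = (z == 0).
Proof.
apply/idP/idP => [/eqP h|/eqP ->]; last by rewrite nc0.
by apply/eqP; apply: normr0_eq0; rewrite ncE h.
Qed.

Lemma ncX x n : nc (x ^+ n) = nc x ^+ n.
Proof.
elim: n => [|n IH]; first by rewrite !expr0 -[1]/((1:R)%:C) ncR normr1.
by rewrite !exprS ncM IH.
Qed.

Lemma ncB x y : nc (x - y) = nc (y - x).
Proof. by rewrite -ncN opprB. Qed.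

Definition rho (p : C * R) := nc p.1 + `|p.2|.

Definition cont (F : C * R -> C) (L : C) :=
  forall e, 0 < e -> exists2 d, 0 < d & forall p, rho p < d -> nc (F p - L) < e.

Lemma cont_eq F L M : cont F L -> L = M -> cont F M.
Proof. by move=> h <-. Qed.

Lemma cont_ext F G L : (forall p, F p = G p) -> cont F L -> cont G L.
Proof.
move=> e h eps he; have [d dp hd] := h eps he; exists d => // p hp.
by rewrite -e; apply: hd.
Qed.

Lemma cont_const c : cont (fun _ => c) c.
Proof. by move=> e he; exists 1 => // p _; rewrite subrr nc0. Qed.

Lemma cont_fst : cont (fun p => p.1) 0.
Proof.
move=> e he; exists e => // p hp; rewrite subr0.
by apply: le_lt_trans hp; rewrite /rho lerDl normr_ge0.
Qed.

Lemma cont_snd : cont (fun p => (p.2)%:C) 0.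
Proof.
move=> e he; exists e => // p hp; rewrite subr0 ncR.
by apply: le_lt_trans hp; rewrite /rho lerDr nc_ge0.
Qed.

Lemma cont_add F G L M : cont F L -> cont G M -> cont (fun p => F p + G p) (L + M).
Proof.
move=> hF hG e he.
have he2 : 0 < e / 2 by rewrite divr_gt0.
have [d1 d1p h1] := hF _ he2; have [d2 d2p h2] := hG _ he2.
exists (Num.min d1 d2); first by rewrite lt_min d1p d2p.
move=> p; rewrite lt_min => /andP[p1 p2].
have := h1 _ p1; have := h2 _ p2.
have -> : F p + G p - (L + M) = (F p - L) + (G p - M) by ring.
have := ncD (F p - L) (G p - M); lra.
Qed.

Lemma cont_opp F L : cont F L -> cont (fun p => - F p) (- L).
Proof.
move=> hF e he; have [d dp hd] := hF _ he; exists d => // p hp.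
by rewrite -opprD ncN; apply: hd.
Qed.

Lemma cont_mul F G L M : cont F L -> cont G M -> cont (fun p => F p * G p) (L * M).
Proof.
move=> hF hG e he.
set A := nc L; set B := nc M.
have Ap : 0 <= A by apply: nc_ge0.
have Bp : 0 <= B by apply: nc_ge0.
have e1p : 0 < Num.min 1 (e / (2 * (B + 1))).
  by rewrite lt_min ltr01 /= divr_gt0 // mulr_gt0 //; lra.
have e2p : 0 < e / (2 * (A + 2)) by rewrite divr_gt0 // mulr_gt0 //; lra.
have [d1 d1p h1] := hF _ e1p; have [d2 d2p h2] := hG _ e2p.
exists (Num.min d1 d2); first by rewrite lt_min d1p d2p.
move=> p; rewrite lt_min => /andP[p1 p2].
move: (h1 _ p1) (h2 _ p2); rewrite lt_min => /andP[u1 u2] v2.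
set u := nc (F p - L) in u1 u2; set v := nc (G p - M) in v2.
have up : 0 <= u by apply: nc_ge0.
have vp : 0 <= v by apply: nc_ge0.
rewrite ltr_pdivlMr in u2; last by lra.
rewrite ltr_pdivlMr in v2; last by lra.
have hFp : nc (F p) <= A + u.
  have -> : F p = L + (F p - L) by ring.
  exact: ncD.
have -> : F p * G p - L * M = F p * (G p - M) + (F p - L) * M by ring.
apply: (le_lt_trans (ncD _ _)); rewrite !ncM -/u -/v -/B.
have := nc_ge0 (F p).
nra.
Qed.

Lemma cont_exp F L n : cont F L -> cont (fun p => F p ^+ n) (L ^+ n).
Proof.
move=> hF; elim: n => [|n IH].
  by apply: (cont_ext (F := fun _ => 1)) => [p|]; rewrite ?expr0 //; apply: cont_const.
apply: (cont_ext (F := fun p => F p * F p ^+ n)) => [p|]; first by rewrite exprS.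
by rewrite exprS; apply: cont_mul.
Qed.

Lemma cont_sum (I : Type) (s : seq I) (F : I -> C * R -> C) (L : I -> C) :
  (forall i, cont (F i) (L i)) ->
  cont (fun p => \sum_(i <- s) F i p) (\sum_(i <- s) L i).
Proof.
move=> h; elim: s => [|x s IH].
  rewrite big_nil; apply: (cont_ext (F := fun _ => 0)) => [p|]; rewrite ?big_nil //.
  exact: cont_const.
rewrite big_cons; apply: (cont_ext (F := fun p => F x p + \sum_(i <- s) F i p)).
  by move=> p; rewrite big_cons.
exact: cont_add.
Qed.

Lemma cont_prod (I : Type) (s : seq I) (F : I -> C * R -> C) (L : I -> C) :
  (forall i, cont (F i) (L i)) ->
  cont (fun p => \prod_(i <- s) F i p) (\prod_(i <- s) L i).
Proof.
move=> h; elim: s => [|x s IH].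
  rewrite big_nil; apply: (cont_ext (F := fun _ => 1)) => [p|]; rewrite ?big_nil //.
  exact: cont_const.
rewrite big_cons; apply: (cont_ext (F := fun p => F x p * \prod_(i <- s) F i p)).
  by move=> p; rewrite big_cons.
exact: cont_mul.
Qed.

Lemma cont_mmap n (P : {mpoly R[n]}) (H : C * R -> 'I_n -> C) (H0 : 'I_n -> C) :
  (forall i, cont (fun p => H p i) (H0 i)) ->
  cont (fun p => mmap (real_complex R) (H p) P) (mmap (real_complex R) H0 P).
Proof.
move=> hH; rewrite /mmap /mmap1.
apply: cont_sum => m; apply: cont_mul; first exact: cont_const.
by apply: cont_prod => i; apply: cont_exp.
Qed.

End Cont.

Section Root.
Variable R : realType.
Local Notation C := R[i].

Lemma prod_ge (rs : seq C) (e : R) : 0 <= e -> (forall z, z \in rs -> e <= nc z) ->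
  e ^+ size rs <= \prod_(z <- rs) nc z.
Proof.
move=> e0; elim: rs => [|x s IH] h; first by rewrite big_nil expr0.
rewrite big_cons /= exprS; apply: ler_pM => //; first exact: exprn_ge0.
  by apply: h; rewrite inE eqxx.
by apply: IH => z zs; apply: h; rewrite inE zs orbT.
Qed.

Lemma small_root (x0 x1 x2 x3 x4 : C) (e : R) : x4 != 0 -> x0 != 0 -> 0 < e ->
  nc x0 < e ^+ 4 * nc x4 ->
  exists z, [/\ nc z < e, z != 0 & x0 + x1 * z + x2 * z ^+ 2 + x3 * z ^+ 3 + x4 * z ^+ 4 = 0].
Proof.
move=> h4 h0 ep hlt.
pose p : {poly C} := Poly [:: x0; x1; x2; x3; x4].
have pE : forall a, p.[a] = x0 + x1 * a + x2 * a ^+ 2 + x3 * a ^+ 3 + x4 * a ^+ 4.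
  by move=> a; rewrite /p /= !horner_cons horner0; ring.
have hseq : (p : seq C) = [:: x0; x1; x2; x3; x4] by rewrite (@PolyK _ 1).
have lc : lead_coef p = x4 by rewrite lead_coefE hseq.
have [rs prs] := closed_field_poly_normal p.
rewrite lc in prs.
have srs : size rs = 4.
  have := congr1 (fun q : {poly C} => size q) prs.
  by rewrite /= size_scale // size_prod_XsubC hseq => -[].
have hrs : has (fun z => nc z < e) rs.
  apply/negPn/negP => /hasPn H.
  have H' : forall z, z \in rs -> e <= nc z by move=> z /H; rewrite -leNgt.
  have := prod_ge (ltW ep) H'; rewrite srs => hp.
  have p0 : p.[0] = x0 by rewrite pE; ring.
  have e0 : x0 = x4 * \prod_(z <- rs) (0 - z).
    by rewrite -p0 {1}prs hornerZ horner_prod; congr (_ * _); apply: eq_bigr => z _; rewrite hornerXsubC.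
  have : nc x0 = nc x4 * \prod_(z <- rs) nc z.
    rewrite e0 ncM; congr (_ * _).
    elim: rs {prs srs H H' hp e0} => [|y s IH]; first by rewrite !big_nil -[1]/((1:R)%:C) ncR normr1.
    by rewrite !big_cons ncM IH sub0r ncN.
  move=> ex; move: hlt; rewrite ex.
  have := nc_ge0 x4; nra.
have [z zin hz] := hasP hrs.
exists z; split => //.
  have p0 : p.[0] = x0 by rewrite pE; ring.
  apply/eqP => z0; have : root p z by rewrite prs rootZ // root_prod_XsubC.
  by rewrite /root z0 p0 (negbTE h0).
have : root p z by rewrite prs rootZ // root_prod_XsubC.
by rewrite /root pE => /eqP.
Qed.
End Root.

Section Pts.
Variable R : realType.
Local Notation C := R[i].

Definition Xc (al be : R) (a : C) (u : R) : C :=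
  al%:C * a + be%:C * (u%:C * (2 - a * u%:C)).
Definition Yc (a : C) (u : R) : C := (u%:C * (2 - a * u%:C) - a) / 2.
Definition Vpt (z al be : R) (a : C) (u : R) : 'I_4 -> C :=
  fun i => nth 0 [:: z%:C * Xc al be a u; z%:C * Yc a u; z%:C; z%:C * (a * u%:C)] i.

Definition gA1 (al be u : R) := al - be * u ^+ 2.
Definition gB1 (be u : R) := 2 * be * u.
Definition gA2 (u : R) := - (1 + u ^+ 2) / 2.
Definition gp2 k r al be u := gA1 al be u ^+ 2 + (r ^+ 2 + k ^+ 2) * u ^+ 2.
Definition gp1 (k al be u : R) := 2 * gA1 al be u * gB1 be u - 2 * k * u.
Definition gp0 (be u : R) := gB1 be u ^+ 2.
Definition gq2 (al be u : R) := gA1 al be u ^+ 2 + gA2 u ^+ 2.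
Definition gq1 (al be u : R) := 2 * (gA1 al be u * gB1 be u + gA2 u * u).
Definition gq0 (be u : R) := gB1 be u ^+ 2 + u ^+ 2.
Definition g4f k r al be u := gp2 k r al be u ^+ 2 - 4 * r ^+ 2 * u ^+ 2 * gq2 al be u.
Definition g3f k r al be u := 2 * gp2 k r al be u * gp1 k al be u - 4 * r ^+ 2 * u ^+ 2 * gq1 al be u.
Definition g2f k r al be u := gp1 k al be u ^+ 2 + 2 * gp2 k r al be u * gp0 be u
   - 4 * r ^+ 2 * u ^+ 2 * gq0 be u.
Definition g1f k al be u := 2 * gp1 k al be u * gp0 be u.
Definition g0f be u := gp0 be u ^+ 2.

Lemma Xc_E al be a u : Xc al be a u = (gA1 al be u)%:C * a + (gB1 be u)%:C.
Proof.
rewrite /Xc /gA1 /gB1 !(rmorphB, rmorphD, rmorphM, rmorphXn, rmorph_nat) /=; ring.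
Qed.

Lemma Yc_E a u : Yc a u = (gA2 u)%:C * a + u%:C.
Proof.
rewrite /Yc /gA2 !(rmorphB, rmorphD, rmorphM, rmorphXn, rmorphN, fmorph_div, rmorph_nat, rmorph1) /=.
by field.
Qed.

Lemma F2_V k r z al be a u :
  mmap (real_complex R) (Vpt z al be a u) (F2h k r) =
  z%:C ^+ 4 * ((g0f be u)%:C + (g1f k al be u)%:C * a + (g2f k r al be u)%:C * a ^+ 2
     + (g3f k r al be u)%:C * a ^+ 3 + (g4f k r al be u)%:C * a ^+ 4).
Proof.
rewrite mmap_F2 /Vpt /= Xc_E Yc_E.
rewrite /g0f /g1f /g2f /g3f /g4f /gp2 /gp1 /gp0 /gq2 /gq1 /gq0.
move: (gA1 al be u) (gB1 be u) (gA2 u) => A1 B1 A2.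
rewrite !(rmorphB, rmorphD, rmorphM, rmorphXn, rmorph_nat) /=.
ring.
Qed.

Lemma F1_V_gen (s c z : R) a u : s != 0 ->
  let V := Vpt z ((1 - c) / (2 * s)) ((1 + c) / (2 * s)) a u in
  V 1 ^+ 2 - (V 0 * s%:C - V 1 * c%:C) ^+ 2 + 2 * V 2 * V 3 - V 3 ^+ 2 = 0.
Proof.
move=> hs /=; rewrite /Vpt /= /Xc /Yc.
rewrite !(fmorph_div, rmorphB, rmorphD, rmorphM, rmorph1, rmorph_nat) /=.
have hs' : s%:C != 0 by rewrite fmorph_eq0.
by field.
Qed.

Lemma cont_rconst (c : R) : cont (fun _ => c%:C) (c%:C).
Proof. exact: cont_const. Qed.
Lemma cont_rsnd : cont (fun p : C * R => (p.2)%:C) ((0 : R)%:C).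
Proof. exact: cont_snd. Qed.
Lemma cont_radd (F G : C * R -> R) a b : cont (fun p => (F p)%:C) (a%:C) ->
  cont (fun p => (G p)%:C) (b%:C) -> cont (fun p => (F p + G p)%:C) ((a + b)%:C).
Proof.
move=> h1 h2; rewrite rmorphD; apply: (cont_ext (F := fun p => (F p)%:C + (G p)%:C)).
  by move=> p; rewrite rmorphD.
exact: cont_add.
Qed.
Lemma cont_rmul (F G : C * R -> R) a b : cont (fun p => (F p)%:C) (a%:C) ->
  cont (fun p => (G p)%:C) (b%:C) -> cont (fun p => (F p * G p)%:C) ((a * b)%:C).
Proof.
move=> h1 h2; rewrite rmorphM; apply: (cont_ext (F := fun p => (F p)%:C * (G p)%:C)).
  by move=> p; rewrite rmorphM.
exact: cont_mul.
Qed.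
Lemma cont_ropp (F : C * R -> R) a : cont (fun p => (F p)%:C) (a%:C) ->
  cont (fun p => (- F p)%:C) ((- a)%:C).
Proof.
move=> h1; rewrite rmorphN; apply: (cont_ext (F := fun p => - (F p)%:C)).
  by move=> p; rewrite rmorphN.
exact: cont_opp.
Qed.
Lemma cont_rexp (F : C * R -> R) a n : cont (fun p => (F p)%:C) (a%:C) ->
  cont (fun p => (F p ^+ n)%:C) ((a ^+ n)%:C).
Proof.
move=> h1; rewrite rmorphXn; apply: (cont_ext (F := fun p => (F p)%:C ^+ n)).
  by move=> p; rewrite rmorphXn.
exact: cont_exp.
Qed.

Ltac cstep := lazymatch goal with
| |- cont (fun p => @real_complex_def _ _ (@?A p + @?B p)) _ => apply: cont_radd
| |- cont (fun p => @real_complex_def _ _ (@?A p * @?B p)) _ => apply: cont_rmul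
| |- cont (fun p => @real_complex_def _ _ (- @?A p)) _ => apply: cont_ropp
| |- cont (fun p => @real_complex_def _ _ (@?A p ^+ _)) _ => apply: cont_rexp
| |- cont (fun p => @real_complex_def _ _ (snd p)) _ => apply: cont_rsnd
| |- cont (fun p => @real_complex_def _ _ _) _ => apply: cont_rconst
| |- cont (fun p => @?A p + @?B p) _ => apply: cont_add
| |- cont (fun p => @?A p * @?B p) _ => apply: cont_mul
| |- cont (fun p => - @?A p) _ => apply: cont_opp
| |- cont (fun p => @?A p ^+ _) _ => apply: cont_exp
| |- cont (fun p => p.1) _ => apply: cont_fst
| |- cont fst _ => apply: cont_fst
| |- cont (fun p => _) _ => apply: cont_const
end.
Ltac cauto := repeat cstep.


Lemma Vpt_cont z al be (i : 'I_4) :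
  cont (fun p => Vpt z al be p.1 p.2 i) ((pt4 0 0 z 0 i)%:C).
Proof.
case: i => [[|[|[|[|i]]]] hi] //=; rewrite /Vpt /pt4 /= ?/Xc ?/Yc.
- by eapply cont_eq; [cauto | rewrite ?rmorph0; ring].
- by eapply cont_eq; [cauto | rewrite ?rmorph0; ring].
- exact: cont_const.
- by eapply cont_eq; [cauto | rewrite ?rmorph0; ring].
Qed.

Lemma g4_cont k r al be :
  cont (fun p => (g4f k r al be p.2)%:C) ((al ^+ 4)%:C).
Proof.
rewrite /g4f /gp2 /gq2 /gA1 /gA2.
eapply cont_eq; first cauto.
congr (_%:C); ring.
Qed.
End Pts.

Section Find.
Variable R : realType.
Local Notation C := R[i].

Definition alt (t : R) := (1 - cpar t) / (2 * spar t).
Definition bet (t : R) := (1 + cpar t) / (2 * spar t).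

Lemma find_point (k r t z : R) (ht : t != 0) (hz : z != 0) (eta : R) : 0 < eta ->
  exists (a : C) (u : R), [/\ rho (a, u) < eta,
    mmap (real_complex R) (Vpt z (alt t) (bet t) a u) (F1h t) = 0,
    mmap (real_complex R) (Vpt z (alt t) (bet t) a u) (F2h k r) = 0 &
    Vpt z (alt t) (bet t) a u 3 != 0].
Proof.
move=> etap.
have hs := @s_neq0 R t ht.
have h1c := @onemc_neq0 R t ht.
have h2c := @onepc_neq0 R t.
have alne : alt t != 0.
  by rewrite /alt; apply: mulf_neq0 => //; rewrite invr_eq0; apply: mulf_neq0; rewrite ?pnatr_eq0.
have bene : bet t != 0.
  by rewrite /bet; apply: mulf_neq0 => //; rewrite invr_eq0; apply: mulf_neq0; rewrite ?pnatr_eq0.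
set al := alt t; set be := bet t.
have al2 : 0 < al ^+ 2 by rewrite lt_def sqr_ge0 expf_neq0 // andbT.
have al4 : 0 < al ^+ 4 by rewrite (_ : 4 = 2 + 2)%N // exprD mulr_gt0.
have e4 : 0 < al ^+ 4 / 2 by rewrite divr_gt0.
have [d4 d4p hd4] := g4_cont k r al be e4.
pose u := Num.min (d4 / 2) (Num.min (eta / 4) (eta / 2 * `|al| / (4 * (`|be| + 1)))).
have bep : 0 <= `|be| := normr_ge0 be.
have alp : 0 < `|al| by rewrite normr_gt0.
have up : 0 < u.
  rewrite /u !lt_min !divr_gt0 //; try lra.
  by rewrite mulr_gt0 //; lra.
have u1 : u <= d4 / 2 by rewrite /u ge_min lexx.
have u2 : u <= eta / 4 by rewrite /u !ge_min lexx orbT.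
have u3 : u <= eta / 2 * `|al| / (4 * (`|be| + 1)) by rewrite /u !ge_min lexx !orbT.
have hg4 : al ^+ 4 / 2 < g4f k r al be u.
  have := hd4 (0, u); rewrite /rho /= nc0 add0r ger0_norm ?ltW // => h.
  have := h ltac:(lra).
  rewrite -rmorphB ncR ltr_norml => /andP[hh1 hh2]; lra.
have g4p : 0 < g4f k r al be u by lra.
have g0e : g0f be u = (2 * be * u) ^+ 4 by rewrite /g0f /gp0 /gB1 -exprM.
have g0ne : g0f be u != 0.
  rewrite g0e expf_neq0 //; apply: mulf_neq0; last by rewrite gt_eqF.
  by apply: mulf_neq0; rewrite ?pnatr_eq0.
have hsmall : nc (g0f be u)%:C < (eta / 2) ^+ 4 * nc (g4f k r al be u)%:C.
  rewrite !ncR g0e normrX (ger0_norm (ltW g4p)).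
  set b := `|2 * be * u|.
  have bE : b = 2 * `|be| * u by rewrite /b !normrM normr_nat (ger0_norm (ltW up)).
  have bp : 0 <= b by apply: normr_ge0.
  have u3' : u * (4 * (`|be| + 1)) <= eta / 2 * `|al|.
    by rewrite -ler_pdivlMr // mulr_gt0 //; lra.
  have hb : b <= eta / 2 * `|al| / 2.
    rewrite bE; have := mulr_ge0 bep (ltW up); nra.
  have hb4 : b ^+ 4 <= (eta / 2 * `|al| / 2) ^+ 4.
    have c0 : 0 <= eta / 2 * `|al| / 2.
      by apply: mulr_ge0; [apply: mulr_ge0; [lra|apply: normr_ge0]|lra].
    by rewrite lerXn2r ?nnegrE.
  have na : `|al| ^+ 4 = al ^+ 4 by rewrite -normrX ger0_norm // (ltW al4).
  have e16 : (eta / 2 * `|al| / 2) ^+ 4 = (eta / 2) ^+ 4 * `|al| ^+ 4 / 16.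
    by field.
  rewrite e16 na in hb4.
  have E4 : 0 < (eta / 2) ^+ 4 by rewrite exprn_gt0 // divr_gt0.
  apply: (le_lt_trans hb4); rewrite -mulrA ltr_pM2l //; lra.
have g4ne' : (g4f k r al be u)%:C != 0 by rewrite fmorph_eq0 gt_eqF.
have g0ne' : (g0f be u)%:C != 0 by rewrite fmorph_eq0.
have eta2 : 0 < eta / 2 by rewrite divr_gt0.
have [a [ha1 ha2 ha3]] := small_root (g1f k al be u)%:C
   (g2f k r al be u)%:C (g3f k r al be u)%:C g4ne' g0ne' eta2 hsmall.
exists a, u; split.
- by rewrite /rho /= (ger0_norm (ltW up)); lra.
- by rewrite mmap_F1; exact: (@F1_V_gen R (spar t) (cpar t) z a u hs).
- by rewrite F2_V ha3 mulr0.
- rewrite /Vpt /=; apply: mulf_neq0; first by rewrite fmorph_eq0.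
  by apply: mulf_neq0 => //; rewrite fmorph_eq0 gt_eqF.
Qed.
End Find.

Section Final.
Variable R : realType.

Lemma mmap_real (P : {mpoly R[4]}) (w : 'I_4 -> R) :
  mmap (real_complex R) (fun i => (w i)%:C) P = (P.@[w])%:C.
Proof.
rewrite /meval /mmap rmorph_sum; apply: eq_bigr => m _.
rewrite rmorphM /mmap1 rmorph_prod; congr (_ * _).
by apply: eq_bigr => i _; rewrite rmorphXn.
Qed.

Lemma sat_zero (k r t : R) P (v : 'I_4 -> R[i]) : in_saturation k r t P ->
  mmap (real_complex R) v (F1h t) = 0 -> mmap (real_complex R) v (F2h k r) = 0 ->
  v 3 != 0 -> mmap (real_complex R) v P = 0.
Proof.
case=> m [A [B hPm]]; move: hPm; rewrite /vW.
move: (F1h t) (F2h k r) => F1 F2 hPm h1 h2 h3.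
have := congr1 (mmap (real_complex R) v) hPm.
rewrite !rmorphD !rmorphM /= h1 h2 !mulr0 addr0 rmorphXn /= mmapXi => /eqP.
by rewrite mulf_eq0 expf_eq0 (negbTE h3) andbF /= => /eqP.
Qed.

Lemma closure_bwd (k r t z : R) : t != 0 -> z != 0 -> in_closure k r t 0 0 z 0.
Proof.
move=> ht hz; split; first by rewrite eqxx /= hz.
move=> P hsat.
have [//|hne] := eqVneq (P.@[pt4 0 0 z 0]) 0.
exfalso.
have hc := cont_mmap P (H := fun p => Vpt z (alt t) (bet t) p.1 p.2)
   (H0 := fun i => (pt4 0 0 z 0 i)%:C) (fun i => Vpt_cont z (alt t) (bet t) i).
rewrite mmap_real in hc.
have Lp : 0 < nc (P.@[pt4 0 0 z 0])%:C by rewrite ncR normr_gt0.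
have [d dp hd] := hc _ Lp.
have [a [u [h1 h2 h3 h4]]] := find_point k r ht hz dp.
have := hd (a, u) h1; rewrite /= (sat_zero hsat h2 h3 h4).
by rewrite sub0r ncN ltxx.
Qed.

Lemma closure_fwd (k r t x y z : R) : t != 0 -> in_closure k r t x y z 0 ->
  x = 0 /\ y = 0 /\ z != 0.
Proof.
move=> ht [hnz hP].
have s1 : in_saturation k r t (F1h t).
  by exists 0%N, 1, 0; rewrite expr0 !mul1r mul0r addr0.
have s2 : in_saturation k r t (F2h k r).
  by exists 0%N, 0, 1; rewrite expr0 !mul1r mul0r add0r.
have e1 := hP _ s1; have e2 := hP _ s2.
rewrite meval_F1 /pt4 /= in e1; rewrite meval_F2 /pt4 /= in e2.
have hx4 : x ^+ 4 = 0 by rewrite -e2; ring.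
have x0 : x = 0 by move/eqP: hx4; rewrite expf_eq0 /= => /eqP.
have hc := @cs1 R t.
have ey : y ^+ 2 - y ^+ 2 * cpar t ^+ 2 = 0 by move: e1; rewrite x0; lra.
have := congr1 (fun w => y ^+ 2 * w) hc => /= hc'.
have ys : y ^+ 2 * spar t ^+ 2 = 0 by lra.
have y0 : y = 0.
  move/eqP: ys; rewrite mulf_eq0 !expf_eq0 /= (negbTE (@s_neq0 R t ht)) orbF.
  by move/eqP.
split => //; split => //.
by move: hnz; rewrite x0 y0 eqxx /= orbF.
Qed.

End Final.

Theorem theorem4 (R : realType) (k r t : R) (hr : 0 < r) (ht : t != 0) :
  let c := cpar t in let s := spar t in
  (forall x y z : R, in_closure k r t x y z 0 <->
     (x = 0 /\ y = 0 /\ z != 0)) /\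
  (forall omega : R -> R -> R, local_solution t omega ->
     leading_form_is (local_eq k r t omega)
       (fun X Y => (Eform k s c X Y) ^+ 2) 4) /\
  qdisc (Eform k s c) = 4 * k * s ^+ 2 * (k - 1) /\
  ((~ factors_distinct_lin (Eform (real_complex R k) (real_complex R s) (real_complex R c))) <->
     qdisc (Eform k s c) = 0) /\
  (qdisc (Eform k s c) = 0 <-> (k = 0 \/ k = 1)).
Proof.
move=> c s.
have hcs : c ^+ 2 + s ^+ 2 = 1 by exact: (@cs1 R t).
have hs : s != 0 by exact: (@s_neq0 R t ht).
split.
  move=> x y z; split; first exact: closure_fwd.
  by case=> -> [-> hz]; exact: closure_bwd.
split; first by move=> omega; exact: part2.
split; first exact: qdisc_E.
split; first exact: factor_iff.
by rewrite qdisc_E //; exact: qdisc0.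
Qed.
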